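(* Let $V$ be a vector space over $\mathbb{F}_2$ of finite dimension $n>1$, let $e=(e_i)_{i=1}^n$ be a basis of $V$, set $e_0=\sum_{i=1}^n e_i$ and \[ \xi_e=n+1+\sum_{i=0}^n X^{e_i}\in\mathbb{F}_2[V]. \] Then $\xi_e\in I^2[V]$ and $\mathrm{Pf}_2(\xi_e)=n-1$.
   Context: $\mathbb{F}_2[V]$ is the group algebra of $V$, elements $\sum_{v\in V}\alpha_vX^v$, $X^0=1$, $X^uX^v=X^{u+v}$; integers denote multiples of $1$ in $\mathbb{F}_2$. $I[V]$ is the kernel of the augmentation map $\sum\alpha_vX^v\mapsto\sum\alpha_v$, and $I^2[V]$ its square. A $2$-fold Pfister element is a product $(1+X^{u})(1+X^{v})$ with $u,v\in V$. For $\xi\in I^2[V]$, $\mathrm{Pf}_2(\xi)$ is the minimal number of terms in an expression of $\xi$ as a sum of $2$-fold Pfister elements. *)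

(* Defs.v *)
From HB Require Import structures.
From mathcomp Require Import all_boot all_order all_algebra.
Set Implicit Arguments. Unset Strict Implicit. Unset Printing Implicit Defensive.
Import GRing.Theory.
Local Open Scope ring_scope.

Notation V n := 'rV['F_2]_n.

(* The group algebra F_2[V]: elements sum_v alpha_v X^v, represented by the
   coefficient function v |-> alpha_v.  Addition is the (pointwise) zmodType
   addition of finite functions; multiplication is convolution [gmul] below
   (NOT the pointwise product of {ffun _ -> _}). *)
Definition GA (n : nat) := {ffun V n -> 'F_2}.

Definition gX (n : nat) (v : V n) : GA n := [ffun w => (w == v)%:R].

Definition gone (n : nat) : GA n := gX 0.

Definition gnat (n : nat) (k : nat) : GA n := (gone n) *+ k.

(* Multiplication in the group algebra: X^u X^v = X^(u+v), extended bilinearly. *)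
Definition gmul (n : nat) (f g : GA n) : GA n :=
  [ffun w => \sum_(u : V n) f u * g (w - u)].

Definition aug (n : nat) (f : GA n) : 'F_2 := \sum_(v : V n) f v.

Definition inI (n : nat) (f : GA n) : Prop := aug f = 0.

Definition inI2 (n : nat) (xi : GA n) : Prop :=
  exists s : seq (GA n * GA n),
    (forall p, p \in s -> inI p.1 /\ inI p.2) /\
    xi = \sum_(p <- s) gmul p.1 p.2.

Definition pfister2 (n : nat) (u v : V n) : GA n :=
  gmul (gone n + gX u) (gone n + gX v).

Definition pfsum (n : nat) (s : seq (V n * V n)) : GA n :=
  \sum_(p <- s) pfister2 p.1 p.2.

Definition Pf2_is (n : nat) (xi : GA n) (k : nat) : Prop :=
  (exists s : seq (V n * V n), size s = k /\ pfsum s = xi) /\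
  (forall s : seq (V n * V n), pfsum s = xi -> (k <= size s)%N).

(* Given a basis e_1..e_n (the rows of E), e_0 = sum_i e_i and
   xi_e = (n+1) + sum_{i=0}^n X^{e_i}. *)
Definition e0 (n : nat) (E : 'M['F_2]_n) : V n := \sum_(i < n) row i E.

Definition xi_e (n : nat) (E : 'M['F_2]_n) : GA n :=
  gnat n n.+1 + gX (e0 E) + \sum_(i < n) gX (row i E).

(* Main.v *)
Require Import Defs.
From mathcomp Require Import all_boot all_order all_algebra ring zify.
Import GRing.Theory.
Set Implicit Arguments. Unset Strict Implicit.
Local Open Scope ring_scope.

Lemma two0 : (2:'F_2) = 0. Proof. exact: (pchar_Fp_0 (isT : prime 2)). Qed.
Lemma F2x2 (x : 'F_2) : x + x = 0.
Proof. by rewrite -mulr2n -mulr_natr two0 mulr0. Qed.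

Section S.
Variable n : nat.
Implicit Types (f g h : GA n) (u v w : V n).

Lemma GAx2 f : f + f = 0.
Proof. by apply/ffunP => w; rewrite !ffunE F2x2. Qed.
Lemma Vx2 v : v + v = 0.
Proof. by apply/matrixP => i j; rewrite !mxE F2x2. Qed.

Lemma gXE v w : gX v w = (w == v)%:R.
Proof. by rewrite ffunE. Qed.

Lemma gmulDl f g h : gmul (f + g) h = gmul f h + gmul g h.
Proof.
apply/ffunP => w; rewrite !ffunE -big_split /=; apply: eq_bigr => u _.
by rewrite ffunE mulrDl.
Qed.
Lemma gmulDr f g h : gmul h (f + g) = gmul h f + gmul h g.
Proof.
apply/ffunP => w; rewrite !ffunE -big_split /=; apply: eq_bigr => u _.
by rewrite ffunE mulrDr.
Qed.
Lemma gmulXX u v : gmul (gX u) (gX v) = gX (u + v).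
Proof.
apply/ffunP => w; rewrite !ffunE (bigD1 u) //= big1 => [|x xu]; last first.
  by rewrite gXE (negbTE xu) mul0r.
by rewrite !gXE eqxx mul1r addr0 subr_eq addrC.
Qed.

Lemma pfister2E u v : pfister2 u v = gX 0 + gX u + gX v + gX (u + v).
Proof.
rewrite /pfister2 /gone gmulDl !gmulDr !gmulXX !add0r addr0 !addrA.
by rewrite -!addrA (addrCA (gX v)).
Qed.

Lemma pf_zero u v : [|| u == 0, v == 0 | u == v] -> pfister2 u v = 0.
Proof.
rewrite pfister2E; case/or3P => /eqP->.
- by rewrite add0r [gX 0 + gX 0]GAx2 add0r GAx2.
- by rewrite addr0 (addrAC (gX 0)) [gX 0 + gX 0]GAx2 add0r GAx2.
- by rewrite [v + v]Vx2 -(addrA (gX 0)) [gX v + gX v]GAx2 addr0 GAx2.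
Qed.

Definition push (M : 'M['F_2]_n) f : GA n :=
  [ffun w => \sum_v f v * (v *m M == w)%:R].

Lemma pushD M : {morph push M : f g / f + g}.
Proof.
move=> f g; apply/ffunP => w; rewrite !ffunE -big_split /=.
by apply: eq_bigr => u _; rewrite ffunE mulrDl.
Qed.
Lemma push0 M : push M 0 = 0.
Proof. by apply/ffunP => w; rewrite !ffunE big1 // => u _; rewrite ffunE mul0r. Qed.
Lemma push_gX M u : push M (gX u) = gX (u *m M).
Proof.
apply/ffunP => w; rewrite !ffunE (bigD1 u) //= big1 => [|x xu]; last first.
  by rewrite gXE (negbTE xu) mul0r.
by rewrite gXE eqxx mul1r addr0 eq_sym.
Qed.
Lemma push_pf M u v : push M (pfister2 u v) = pfister2 (u *m M) (v *m M).
Proof. by rewrite !pfister2E !pushD !push_gX mul0mx mulmxDl. Qed.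
Lemma push_pfsum M s :
  push M (pfsum s) = pfsum [seq (p.1 *m M, p.2 *m M) | p <- s].
Proof.
rewrite /pfsum big_map (big_morph _ (pushD M) (push0 M)).
by apply: eq_bigr => p _; rewrite push_pf.
Qed.

End S.

Section L.
Variable n : nat.
Variable E : 'M['F_2]_n.
Hypothesis hE : E \in unitmx.

Definition xiS (S : {set 'I_n}) : GA n :=
  \sum_(i in S) (gone n + gX (row i E)) + (gone n + gX (\sum_(i in S) row i E)).

Lemma rowEinv i : row i E *m invmx E = 'e_i.
Proof. by rewrite -row_mul mulmxV // row1. Qed.

Lemma sum_rows_neq0 (T : {set 'I_n}) k : k \in T -> \sum_(i in T) row i E != 0.
Proof.
move=> kT; apply/eqP => h.
have := congr1 (fun r => (r *m invmx E) 0 k) h.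
rewrite /= mul0mx mulmx_suml summxE mxE (bigD1 k) //= big1 => [|i /andP[_ ik]].
  by rewrite rowEinv mxE !eqxx addr0.
by rewrite rowEinv mxE eq_sym (negbTE ik) andbF.
Qed.

Lemma row_inj i j : (row i E == row j E) = (i == j).
Proof.
apply/eqP/eqP => [h|->//].
have := congr1 (fun r => (r *m invmx E) 0 i) h.
rewrite /= !rowEinv !mxE !eqxx /=.
by case: eqP => // _ /eqP; rewrite oner_eq0.
Qed.

Lemma gone_val w : gone n w = (w == 0)%:R.
Proof. by rewrite /gone gXE. Qed.

Lemma xiS_at j (S : {set 'I_n}) : j \in S -> (1 < #|S|)%N -> xiS S (row j E) = 1.
Proof.
move=> jS cS.
have ne0 : row j E != 0.
  have := @sum_rows_neq0 [set j] j (set11 j); by rewrite big_set1.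
have [k kS] : exists k, k \in S :\ j.
  apply/set0Pn; rewrite -card_gt0; move: cS; rewrite (cardsD1 j) jS; lia.
rewrite /xiS !ffunE sum_ffunE (negbTE ne0) add0r.
rewrite (big_setD1 j) //= (big_setD1 j jS) /= !ffunE (negbTE ne0) add0r.
rewrite eqxx big1 => [|i]; last first.
  rewrite in_setD1 => /andP[ij _]; rewrite !ffunE (negbTE ne0) add0r.
  by rewrite row_inj eq_sym (negbTE ij).
rewrite addr0.
suff -> : (row j E == row j E + \sum_(i in S :\ j) row i E) = false by rewrite addr0.
apply/negbTE; rewrite -subr_eq0 opprD addrA subrr add0r oppr_eq0.
exact: sum_rows_neq0 kS.
Qed.

Definition Mk j : 'M['F_2]_n := invmx E *m (1%:M - delta_mx j j) *m E.

Lemma rowM i j : row i E *m Mk j = if i == j then 0 else row i E.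
Proof.
rewrite /Mk !mulmxA rowEinv mulmxBr mulmx1 mul_delta_mx_cond.
case: eqP => [->|_]; first by rewrite mulr1n subrr mul0mx.
by rewrite mulr0n subr0 -rowE.
Qed.

Lemma push_xiS j (S : {set 'I_n}) : j \in S -> push (Mk j) (xiS S) = xiS (S :\ j).
Proof.
move=> jS.
rewrite /xiS pushD (big_morph _ (pushD _) (push0 _)) pushD /gone !push_gX mul0mx.
rewrite (big_setD1 j) //= pushD !push_gX mul0mx rowM eqxx GAx2 add0r.
rewrite mulmx_suml (big_setD1 j jS) /= rowM eqxx add0r.
congr (_ + (_ + gX _)).
  apply: eq_bigr => i; rewrite in_setD1 => /andP[ij _].
  by rewrite pushD !push_gX mul0mx rowM (negbTE ij).
apply: eq_bigr => i; rewrite in_setD1 => /andP[ij _].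
by rewrite rowM (negbTE ij).
Qed.

Lemma lower k : forall (S : {set 'I_n}) (s : seq (V n * V n)), #|S| = k -> pfsum s = xiS S -> (#|S|.-1 <= size s)%N.
Proof.
elim: k => [|k IH] S s cS hs; first by rewrite cS.
case: (leqP #|S| 1) => [c1|c2]; first by move: c1; case: #|S| => [|[|]].
have [j jS] : exists j, j \in S by apply/set0Pn; rewrite -card_gt0; lia.
set w := row j E.
have hw : pfsum s w = 1 by rewrite hs xiS_at.
have /hasP [p ps pw] : has (fun p => pfister2 p.1 p.2 w != 0) s.
  apply/negPn/negP => /hasPn H; move: hw.
  rewrite /pfsum sum_ffunE big1_seq => [|q /andP[_ qs]]; last first.
    by apply/eqP/negPn; apply: H.
  by move/eqP; rewrite eq_sym oner_eq0.
have wM : w *m Mk j = 0 by rewrite rowM eqxx.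
have ne0 : w != 0.
  have := @sum_rows_neq0 [set j] j (set11 j); by rewrite big_set1.
pose f := fun q : V n * V n => (q.1 *m Mk j, q.2 *m Mk j).
have pz : pfister2 (f p).1 (f p).2 = 0.
  apply: pf_zero => /=.
  move: pw; rewrite pfister2E !ffunE (negbTE ne0) add0r.
  case: (eqVneq w p.1) => [<-|_]; first by rewrite wM eqxx.
  case: (eqVneq w p.2) => [<-|_]; first by rewrite wM eqxx orbT.
  case: (eqVneq w (p.1 + p.2)) => [ew|_]; last by rewrite !addr0 eqxx.
  move=> _; move: wM; rewrite ew mulmxDl => /eqP; rewrite addr_eq0 => /eqP ->.
  suff -> : - (p.2 *m Mk j) = p.2 *m Mk j by rewrite eqxx !orbT.
  by apply/eqP; rewrite eq_sym -subr_eq0 opprK Vx2.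
have hs' : pfsum [seq f q | q <- rem p s] = xiS (S :\ j).
  rewrite -push_xiS // -hs push_pfsum.
  rewrite /pfsum (perm_big _ (perm_map f (perm_to_rem ps))) /= big_cons pz add0r.
  by [].
have c' : #|S :\ j| = k by move: cS; rewrite (cardsD1 j) jS; lia.
have := IH _ _ c' hs'; rewrite size_map size_rem // [#|S|](cardsD1 j) jS c'.
have : (0 < size s)%N by case: (s) ps.
rewrite /=; lia.
Qed.

End L.

Section U.
Variable m : nat.
Variable E : 'M['F_2]_m.+1.
Definition aa k := row (inord k) E.
Definition bb k := \sum_(j < k) row (inord j) E.

Lemma tel k : pfsum [seq (bb i.+1, aa i.+1) | i <- iota 0 k] =
  gnat _ k + gX (bb 1) + gX (bb k.+1) + \sum_(i < k) gX (aa i.+1).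
Proof.
elim: k => [|k IH].
  by rewrite /pfsum big_nil big_ord0 /gnat mulr0n add0r addr0 GAx2.
have -> : iota 0 k.+1 = iota 0 k ++ [:: k] by rewrite -addn1 iotaD.
rewrite map_cat /pfsum big_cat /= big_seq1 -/(pfsum _) IH.
rewrite pfister2E big_ord_recr /=.
have -> : bb k.+2 = bb k.+1 + aa k.+1 by rewrite /bb big_ord_recr.
rewrite /gnat mulrSr /gone.
set A := gone _ *+ k; set B := gX (bb 1); set C := gX (bb k.+1);
set D := \sum_(i < k) _; set G := gX (aa k.+1); set H := gX (_ + _).
apply/ffunP => w; rewrite !ffunE.
move: (A w) (D w) (w == bb 1)%:R (w == bb k.+1)%:R (w == 0)%:R (w == aa k.+1)%:R (w == bb k.+1 + aa k.+1)%:R => a d z c z0 g h.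
have -> : a + z + c + d + (z0 + c + g + h) = a + z0 + z + h + (d + g) + (c + c) by ring.
by rewrite F2x2 addr0.
Qed.
End U.

Lemma aug_add n (f g : GA n) : aug (f + g) = aug f + aug g.
Proof. by rewrite /aug -big_split; apply: eq_bigr => v _; rewrite ffunE. Qed.
Lemma aug_gX n (v : V n) : aug (gX v) = 1.
Proof.
rewrite /aug (bigD1 v) //= big1 => [|w wv]; first by rewrite gXE eqxx addr0.
by rewrite gXE (negbTE wv).
Qed.
Lemma inI_pf n (v : V n) : inI (gone n + gX v).
Proof. by rewrite /inI aug_add /gone !aug_gX F2x2. Qed.

Theorem proposition1p4 (n : nat) (E : 'M['F_2]_n) :
  (1 < n)%N -> E \in unitmx ->
  inI2 (xi_e E) /\ Pf2_is (xi_e E) n.-1.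
Proof.
move=> n1 hE.
have xiT : xi_e E = xiS E setT.
  rewrite /xi_e /xiS /gnat /e0 !(eq_bigl _ _ (fun i => in_setT i)) big_split /= sumr_const card_ord mulrSr.
  rewrite -!addrA; congr (_ + _).
  by rewrite addrA addrC.
have LB : forall s, pfsum s = xi_e E -> (n.-1 <= size s)%N.
  move=> s hs; have := @lower n E hE n setT s; rewrite cardsT card_ord; apply => //.
  by rewrite hs xiT.
case: n n1 E hE xiT LB => [|[|m]] // _ E hE xiT LB.
set s := [seq (bb E i.+1, aa E i.+1) | i <- iota 0 m.+1].
have hs : pfsum s = xi_e E.
  rewrite /s tel.
  have -> : bb E 1 = row ord0 E by rewrite /bb big_ord1; congr row; apply: val_inj; rewrite /= inordK.
  have -> : bb E m.+2 = e0 E by rewrite /bb /e0; apply: eq_bigr => j _; rewrite inord_val.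
  rewrite /xi_e [\sum_(i < m.+2) _]big_ord_recl /gnat -(addn2 m.+1) mulrnDr.
  have -> : gone (m.+2) *+ 2 = 0 by rewrite mulr2n GAx2.
  rewrite addr0.
  have -> : \sum_(i < m.+1) gX (row (lift ord0 i) E) = \sum_(i < m.+1) gX (aa E i.+1).
    apply: eq_bigr => i _; congr (gX (row _ E)); apply: val_inj; rewrite /= inordK //.
    by rewrite ltnS ltn_ord.
  set A := gone _ *+ _; set B := gX (row ord0 E); set C := gX (e0 E); set D := \sum_(i < _) _.
  by rewrite -!addrA; congr (_ + _); rewrite addrCA.
split.
  exists [seq (gone _ + gX p.1, gone _ + gX p.2) | p <- s]; split.
    by move=> p /mapP [q _ ->]; split; apply: inI_pf.
  by rewrite -hs /pfsum [RHS]big_map.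
split; last exact: LB.
by exists s; rewrite size_map size_iota.
Qed.
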